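(* Let $\Gamma$ be a finite index subgroup of $\mathrm{SL}_2(\mathbb{Z})$ and let $f$ be a holomorphic modular form of weight $2$ for $\Gamma$. Define \[ h(\tau)=\int_i^{\tau} f(z)\,dz,\qquad \tau\in\mathfrak{H}. \] Then $h$ is $\rho$-equivariant for $\Gamma$ for some triangular representation $\rho$ of $\Gamma$.
   Context: $\mathfrak{H}$ denotes the complex upper half-plane. A holomorphic modular form of weight $2$ for $\Gamma$ is a holomorphic function $f$ on $\mathfrak{H}$ with $f(\gamma\tau)=(c\tau+d)^2f(\tau)$ for all $\gamma=\begin{pmatrix}a&b\\c&d\end{pmatrix}\in\Gamma$, holomorphic at the cusps. For a matrix $\begin{pmatrix}a&b\\c&d\end{pmatrix}$ and $z\in\mathbb{C}$, write $\begin{pmatrix}a&b\\c&d\end{pmatrix}\cdot z=\frac{az+b}{cz+d}$. Given a representation $\rho:\Gamma\to\mathrm{GL}_2(\mathbb{C})$, a meromorphic function $h$ on $\mathfrak{H}$ is called $\rho$-equivariant for $\Gamma$ if $h(\gamma\tau)=\rho(\gamma)\cdot h(\tau)$ for all $\gamma\in\Gamma$, $\tau\in\mathfrak{H}$ (linear fractional action on both sides). The representation $\rho$ is triangular if every $\rho(\gamma)$ is upper triangular. *)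

(* Defs.v *)
From Stdlib Require Import Reals ZArith List.
From Coquelicot Require Import Coquelicot.

Open Scope C_scope.

Definition in_H (z : C) : Prop := (0 < Im z)%R.

(* Integer 2x2 matrices (a,b,c,d) = [[a,b],[c,d]]. *)
Definition Zmat := (Z * Z * Z * Z)%type.
Definition zmA (g : Zmat) : Z := let '(a,_,_,_) := g in a.
Definition zmB (g : Zmat) : Z := let '(_,b,_,_) := g in b.
Definition zmC (g : Zmat) : Z := let '(_,_,c,_) := g in c.
Definition zmD (g : Zmat) : Z := let '(_,_,_,d) := g in d.

Definition in_SL2Z (g : Zmat) : Prop := (zmA g * zmD g - zmB g * zmC g = 1)%Z.

Definition zmul (g h : Zmat) : Zmat :=
  ((zmA g * zmA h + zmB g * zmC h)%Z, (zmA g * zmB h + zmB g * zmD h)%Z,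
   (zmC g * zmA h + zmD g * zmC h)%Z, (zmC g * zmB h + zmD g * zmD h)%Z).
Definition zid : Zmat := (1%Z, 0%Z, 0%Z, 1%Z).
(* inverse of a determinant-one matrix *)
Definition zinv (g : Zmat) : Zmat := (zmD g, (- zmB g)%Z, (- zmC g)%Z, zmA g).

Definition is_subgroup_SL2Z (Gam : Zmat -> Prop) : Prop :=
  (forall g, Gam g -> in_SL2Z g) /\ Gam zid /\
  (forall g h, Gam g -> Gam h -> Gam (zmul g h)) /\
  (forall g, Gam g -> Gam (zinv g)).

Definition finite_index_SL2Z (Gam : Zmat -> Prop) : Prop :=
  exists reps : list Zmat,
    (forall r, In r reps -> in_SL2Z r) /\
    forall g, in_SL2Z g -> exists r, In r reps /\ Gam (zmul g (zinv r)).

Definition zmobius (g : Zmat) (z : C) : C :=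
  (IZR (zmA g) * z + IZR (zmB g)) / (IZR (zmC g) * z + IZR (zmD g)).

Definition jfac (g : Zmat) (z : C) : C := IZR (zmC g) * z + IZR (zmD g).

Definition holo_on (U : C -> Prop) (f : C -> C) : Prop :=
  forall z, U z -> ex_derive f z.

(* complex exponential exp(2 pi i z / N) *)
Definition qpar (N : nat) (z : C) : C :=
  let t := (2 * PI / INR N)%R in
  (exp (- t * Im z) * cos (t * Re z), exp (- t * Im z) * sin (t * Re z))%R.

(* Holomorphic at all cusps (weight 2): for each gamma in SL_2(Z), the slashed
   function (f|_2 gamma)(tau) = (c tau + d)^(-2) f(gamma tau) has a
   q-expansion, i.e. equals g(exp(2 pi i tau/N)) for some N > 0 and some g
   holomorphic on the open unit disc (including q = 0). *)
Definition holo_at_cusps (f : C -> C) : Prop :=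
  forall gam, in_SL2Z gam ->
    exists (N : nat) (g : C -> C),
      (0 < N)%nat /\ holo_on (fun q => (Cmod q < 1)%R) g /\
      forall tau, in_H tau ->
        f (zmobius gam tau) / (jfac gam tau * jfac gam tau) = g (qpar N tau).

Definition modular_form_wt2 (Gam : Zmat -> Prop) (f : C -> C) : Prop :=
  holo_on in_H f /\
  (forall gam tau, Gam gam -> in_H tau ->
     f (zmobius gam tau) = (jfac gam tau) ^ 2 * f tau) /\
  holo_at_cusps f.

Definition Cmat := (C * C * C * C)%type.
Definition cmA (m : Cmat) : C := let '(a,_,_,_) := m in a.
Definition cmB (m : Cmat) : C := let '(_,b,_,_) := m in b.
Definition cmC (m : Cmat) : C := let '(_,_,c,_) := m in c.
Definition cmD (m : Cmat) : C := let '(_,_,_,d) := m in d.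
Definition cmul (m n : Cmat) : Cmat :=
  (cmA m * cmA n + cmB m * cmC n, cmA m * cmB n + cmB m * cmD n,
   cmC m * cmA n + cmD m * cmC n, cmC m * cmB n + cmD m * cmD n).
Definition cdet (m : Cmat) : C := cmA m * cmD m - cmB m * cmC m.

Definition is_rep (Gam : Zmat -> Prop) (rho : Zmat -> Cmat) : Prop :=
  (forall g, Gam g -> cdet (rho g) <> 0) /\
  (forall g h, Gam g -> Gam h -> rho (zmul g h) = cmul (rho g) (rho h)).

Definition is_triangular (Gam : Zmat -> Prop) (rho : Zmat -> Cmat) : Prop :=
  forall g, Gam g -> cmC (rho g) = 0.

Definition cmobius (m : Cmat) (z : C) : C :=
  (cmA m * z + cmB m) / (cmC m * z + cmD m).

Definition equivariant (Gam : Zmat -> Prop) (rho : Zmat -> Cmat) (h : C -> C) : Prop :=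
  forall gam tau, Gam gam -> in_H tau -> h (zmobius gam tau) = cmobius (rho gam) (h tau).

(* h(tau) = int_i^tau f(z) dz, along the straight segment from i to tau
   (H is convex; f holomorphic so the integral is path independent). *)
Definition prim_from_i (f : C -> C) (tau : C) : C :=
  @RInt C_R_CompleteNormedModule
    (fun t : R => f (Ci + RtoC t * (tau - Ci)) * (tau - Ci)) 0%R 1%R.

(* Main.v *)
Require Import Defs.
From Stdlib Require Import Reals ZArith List Lra Lia.
From Coquelicot Require Import Coquelicot.
Open Scope R_scope.


Lemma normCR (z : C) : @norm R_AbsRing C_R_NormedModule z = Cmod z.
Proof. destruct z as [x y]. unfold norm; simpl. unfold prod_norm, Cmod; simpl. idtac.
  f_equal. change (norm x) with (Rabs x); change (norm y) with (Rabs y). rewrite !Rmult_1_r, <- !Rsqr_def, <- !Rsqr_abs. reflexivity. Qed.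


Lemma sqrt2_pos : 0 < sqrt 2.
Proof. apply sqrt_lt_R0. lra. Qed.

Lemma exd_cont (f : C -> C) z : ex_derive f z ->
  forall eps, 0 < eps -> exists delta, 0 < delta /\
    forall w, Cmod (w - z) < delta -> Cmod (f w - f z) < eps.
Proof.
  intros Hd eps Heps.
  pose proof (ex_derive_continuous f z Hd) as Hc.
  assert (He : 0 < eps / sqrt 2) by (apply Rdiv_lt_0_compat; [lra|apply sqrt2_pos]).
  apply (proj1 (filterlim_locally f (f z))) with (eps := mkposreal _ He) in Hc.
  destruct Hc as [d Hd'].
  exists d. split; [apply cond_pos|].
  intros w Hw.
  specialize (Hd' w Hw).
  apply C_NormedModule_mixin_compat2 in Hd'. simpl in Hd'.
  unfold minus in Hd'. simpl in Hd'.
  replace (sqrt 2 * (eps / sqrt 2)) with eps in Hd' by (field; apply Rgt_not_eq, sqrt2_pos).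
  exact Hd'.
Qed.

Lemma is_derive_eps (f : C -> C) z l : @is_derive C_AbsRing C_NormedModule f z l ->
  forall eps, 0 < eps -> exists delta, 0 < delta /\
    forall w, Cmod (w - z) < delta -> Cmod (f w - f z - (w - z) * l) <= eps * Cmod (w - z).
Proof.
  intros [_ H] eps Heps.
  specialize (H z (fun P HP => HP) (mkposreal _ Heps)).
  destruct H as [d Hd].
  exists d. split; [apply cond_pos|].
  intros w Hw.
  specialize (Hd w Hw). exact Hd.
Qed.

Lemma is_derive_of_eps (f : C -> C) z l :
  (forall eps, 0 < eps -> exists delta, 0 < delta /\
    forall w, Cmod (w - z) < delta -> Cmod (f w - f z - (w - z) * l) <= eps * Cmod (w - z)) ->
  @is_derive C_AbsRing C_NormedModule f z l.
Proof.
  intros H. split; [apply is_linear_scal_l|].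
  intros x Hx. apply (@is_filter_lim_locally_unique _ (AbsRing_NormedModule _)) in Hx. subst x.
  intros eps. destruct (H eps (cond_pos eps)) as [d [Hd0 Hd]].
  exists (mkposreal _ Hd0). intros y Hy.
  apply Hd. exact Hy.
Qed.

Lemma is_deriveR_of_eps (g : R -> C) t (l : C) :
  (forall eps, 0 < eps -> exists delta, 0 < delta /\
    forall s, Rabs (s - t) < delta -> Cmod (g s - g t - RtoC (s - t) * l) <= eps * Rabs (s - t)) ->
  @is_derive R_AbsRing C_R_NormedModule g t l.
Proof.
  intros H. split; [apply is_linear_scal_l|].
  intros x Hx. apply (@is_filter_lim_locally_unique _ (AbsRing_NormedModule _)) in Hx. subst x.
  intros eps. destruct (H eps (cond_pos eps)) as [d [Hd0 Hd]].
  exists (mkposreal _ Hd0). intros y Hy.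
  rewrite !normCR. rewrite scal_R_Cmult. apply Hd. exact Hy.
Qed.

Lemma contR_of_eps (g : R -> C) t :
  (forall eps, 0 < eps -> exists delta, 0 < delta /\
    forall s, Rabs (s - t) < delta -> Cmod (g s - g t) < eps) ->
  @continuous R_UniformSpace C_R_NormedModule g t.
Proof.
  intros H. apply (proj2 (filterlim_locally g (g t))).
  intros eps. destruct (H eps (cond_pos eps)) as [d [Hd0 Hd]].
  exists (mkposreal _ Hd0). intros y Hy.
  apply (@norm_compat1 _ C_R_NormedModule). rewrite normCR. apply Hd. exact Hy.
Qed.

Lemma is_derive_of_eps2 (f : C -> C) z l :
  (forall eps, 0 < eps -> exists delta, 0 < delta /\
    forall w, Cmod (w - z) < delta -> Cmod (f w - f z - (w - z) * l) <= eps * Cmod (w - z)) ->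
  @is_derive C_AbsRing (AbsRing_NormedModule C_AbsRing) f z l.
Proof.
  intros H. split; [apply is_linear_scal_l|].
  intros x Hx. apply (@is_filter_lim_locally_unique _ (AbsRing_NormedModule _)) in Hx. subst x.
  intros eps. destruct (H eps (cond_pos eps)) as [d [Hd0 Hd]].
  exists (mkposreal _ Hd0). intros y Hy.
  apply Hd. exact Hy.
Qed.


Definition seg (f : C -> C) (p q : C) : C :=
  @RInt C_R_CompleteNormedModule
    (fun t : R => (f (p + RtoC t * (q - p)) * (q - p))%C) 0%R 1%R.

Lemma prim_seg f tau : prim_from_i f tau = seg f Ci tau.
Proof. reflexivity. Qed.

Definition contH (f : C -> C) := forall z, 0 < Im z ->
  forall eps, 0 < eps -> exists delta, 0 < delta /\
    forall w, Cmod (w - z) < delta -> Cmod (f w - f z) < eps.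

Ltac cring := repeat match goal with z : C |- _ => destruct z end;
  apply injective_projections; simpl; field.

Lemma im_segpt p q t : Im (p + RtoC t * (q - p))%C = (1 - t) * Im p + t * Im q.
Proof. destruct p, q; simpl; ring. Qed.

Lemma segpt_pos p q t : 0 < Im p -> 0 < Im q -> 0 <= t <= 1 -> 0 < Im (p + RtoC t * (q - p))%C.
Proof. intros Hp Hq Ht. rewrite im_segpt.
  destruct (Req_dec t 0). subst; lra. 
  assert (0 < t * Im q) by (apply Rmult_lt_0_compat; lra).
  assert (0 <= (1 - t) * Im p) by (apply Rmult_le_pos; lra). lra. Qed.

Lemma integrand_cont f p q t : contH f -> 0 < Im (p + RtoC t * (q - p))%C ->
  @continuous R_UniformSpace C_R_NormedModule
    (fun s : R => (f (p + RtoC s * (q - p)) * (q - p))%C) t.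
Proof.
  intros Hf Ht. apply contR_of_eps. intros eps Heps.
  set (d := (q - p)%C). fold d in Ht |- *.
  assert (Hd : 0 <= Cmod d) by apply Cmod_ge_0.
  assert (He : 0 < eps / (Cmod d + 1)) by (apply Rdiv_lt_0_compat; lra).
  destruct (Hf _ Ht _ He) as [del [Hdel H]].
  exists (del / (Cmod d + 1)). split. apply Rdiv_lt_0_compat; lra.
  intros s Hs.
  replace (f (p + RtoC s * d)%C * d - f (p + RtoC t * d)%C * d)%C
    with ((f (p + RtoC s * d)%C - f (p + RtoC t * d)%C) * d)%C by (set (u := f _); set (v := f _); cring).
  rewrite Cmod_mult.
  assert (Hlt : Cmod (f (p + RtoC s * d)%C - f (p + RtoC t * d)%C) < eps / (Cmod d + 1)).
  { apply H. replace (p + RtoC s * d - (p + RtoC t * d))%C with (RtoC (s - t) * d)%C by (unfold d; cring).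
    rewrite Cmod_mult, Cmod_R.
    apply Rle_lt_trans with (Rabs (s - t) * (Cmod d + 1)). apply Rmult_le_compat_l. apply Rabs_pos. lra.
    apply (Rmult_lt_compat_r (Cmod d + 1)) in Hs; [|lra].
    replace (del / (Cmod d + 1) * (Cmod d + 1)) with del in Hs by (field; lra). exact Hs. }
  apply Rle_lt_trans with (eps / (Cmod d + 1) * Cmod d).
  apply Rmult_le_compat_r; [exact Hd| left; exact Hlt].
  apply Rlt_le_trans with (eps / (Cmod d + 1) * (Cmod d + 1)).
  apply Rmult_lt_compat_l; lra. right; field; lra.
Qed.

Lemma seg_exint f p q a b : contH f -> 0 < Im p -> 0 < Im q -> 0 <= a <= 1 -> 0 <= b <= 1 ->
  @ex_RInt C_R_NormedModule (fun s : R => (f (p + RtoC s * (q - p)) * (q - p))%C) a b.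
Proof.
  intros Hf Hp Hq Ha Hb. apply (@ex_RInt_continuous C_R_CompleteNormedModule).
  intros z Hz. apply integrand_cont; auto. apply segpt_pos; auto.
  split. apply Rle_trans with (Rmin a b); [apply Rmin_glb; lra| apply Hz].
  apply Rle_trans with (Rmax a b); [apply Hz | apply Rmax_lub; lra].
Qed.

Definition mid (p q : C) : C := (RtoC (/2) * (p + q))%C.

Lemma im_mid p q : Im (mid p q) = (Im p + Im q) / 2.
Proof. destruct p, q; unfold mid; simpl; field. Qed.

Lemma seg_mid f p q : contH f -> 0 < Im p -> 0 < Im q ->
  seg f p q = (seg f p (mid p q) + seg f (mid p q) q)%C.
Proof.
  intros Hf Hp Hq.
  set (phi := fun s : R => (f (p + RtoC s * (q - p))%C * (q - p))%C).
  assert (E1 : seg f p (mid p q) = @RInt C_R_CompleteNormedModule phi 0 (/2)).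
  { unfold seg.
    rewrite (@RInt_ext C_R_CompleteNormedModule _ (fun y => scal (/2) (phi (/2 * y + 0)))).
    rewrite (@RInt_comp_lin C_R_CompleteNormedModule).
    f_equal; ring.
    apply seg_exint; auto; lra.
    intros x _. rewrite scal_R_Cmult. unfold phi.
    replace (p + RtoC x * (mid p q - p))%C with (p + RtoC (/ 2 * x + 0) * (q - p))%C
      by (unfold mid; cring).
    set (u := f _). unfold mid; cring. }
  assert (E2 : seg f (mid p q) q = @RInt C_R_CompleteNormedModule phi (/2) 1).
  { unfold seg.
    rewrite (@RInt_ext C_R_CompleteNormedModule _ (fun y => scal (/2) (phi (/2 * y + /2)))).
    rewrite (@RInt_comp_lin C_R_CompleteNormedModule).
    f_equal; field.
    apply seg_exint; auto; lra.
    intros x _. rewrite scal_R_Cmult. unfold phi.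
    replace (mid p q + RtoC x * (q - mid p q))%C with (p + RtoC (/ 2 * x + /2) * (q - p))%C
      by (unfold mid; cring).
    set (u := f _). unfold mid; cring. }
  rewrite E1, E2. unfold seg.
  symmetry. apply (@RInt_Chasles C_R_CompleteNormedModule); apply seg_exint; auto; lra.
Qed.

Lemma seg_swap f p q : contH f -> 0 < Im p -> 0 < Im q ->
  seg f q p = (- seg f p q)%C.
Proof.
  intros Hf Hp Hq.
  set (phi := fun s : R => (f (p + RtoC s * (q - p))%C * (q - p))%C).
  unfold seg.
  rewrite (@RInt_ext C_R_CompleteNormedModule _ (fun y => scal (-1) (phi (-1 * y + 1)))).
  rewrite (@RInt_comp_lin C_R_CompleteNormedModule).
  replace (-1 * 0 + 1) with 1 by ring. replace (-1 * 1 + 1) with 0 by ring.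
  rewrite <- (@opp_RInt_swap C_R_CompleteNormedModule). reflexivity.
  apply seg_exint; auto; lra.
  replace (-1 * 0 + 1) with 1 by ring. replace (-1 * 1 + 1) with 0 by ring.
  apply seg_exint; auto; lra.
  intros x _. rewrite scal_R_Cmult. unfold phi.
  replace (q + RtoC x * (p - q))%C with (p + RtoC (-1 * x + 1) * (q - p))%C by cring.
  set (u := f _). cring.
Qed.

Definition tri f a b c : C := (seg f a b + seg f b c + seg f c a)%C.

Lemma tri_subdiv f a b c : contH f -> 0 < Im a -> 0 < Im b -> 0 < Im c ->
  tri f a b c = (tri f a (mid a b) (mid c a) + tri f (mid a b) b (mid b c)
     + tri f (mid c a) (mid b c) c + tri f (mid a b) (mid b c) (mid c a))%C.
Proof.
  intros Hf Ha Hb Hc.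
  assert (Hab : 0 < Im (mid a b)) by (rewrite im_mid; lra).
  assert (Hbc : 0 < Im (mid b c)) by (rewrite im_mid; lra).
  assert (Hca : 0 < Im (mid c a)) by (rewrite im_mid; lra).
  unfold tri.
  rewrite (seg_mid f a b), (seg_mid f b c), (seg_mid f c a) by auto.
  rewrite (seg_swap f (mid a b) (mid c a)), (seg_swap f (mid b c) (mid a b)),
    (seg_swap f (mid c a) (mid b c)) by auto.
  ring.
Qed.

Lemma seg_ext f g p q : (forall t, 0 <= t <= 1 -> f (p + RtoC t * (q - p))%C = g (p + RtoC t * (q - p))%C) ->
  seg f p q = seg g p q.
Proof.
  intros H. unfold seg. apply (@RInt_ext C_R_CompleteNormedModule). intros x Hx.
  rewrite Rmin_left in Hx by lra. rewrite Rmax_right in Hx by lra.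
  rewrite H; auto; lra.
Qed.

Lemma seg_affine (al be : C) p q :
  seg (fun z => al + be * z)%C p q =
  ((al + be * p) * (q - p) + be * (q - p) * (q - p) * RtoC (/2))%C.
Proof.
  set (A := ((al + be * p) * (q - p))%C). set (B := (be * (q - p) * (q - p))%C).
  unfold seg.
  rewrite (@RInt_ext C_R_CompleteNormedModule _ (fun t => A + RtoC t * B)%C).
  2:{ intros x _. unfold A, B. cring. }
  apply (@is_RInt_unique C_R_CompleteNormedModule).
  set (Psi := fun t : R => (RtoC t * A + RtoC (t * t / 2) * B)%C).
  replace (A + B * RtoC (/2))%C with (Psi 1 - Psi 0)%C by (unfold Psi, A, B; cring).
  apply (@is_RInt_derive C_R_CompleteNormedModule Psi).
  - intros x _. apply is_deriveR_of_eps. intros eps Heps.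
    exists (eps / (Cmod B + 1)). split. apply Rdiv_lt_0_compat; [lra|pose proof (Cmod_ge_0 B); lra].
    intros s Hs.
    unfold Psi.
    replace (RtoC s * A + RtoC (s * s / 2) * B - (RtoC x * A + RtoC (x * x / 2) * B) -
        RtoC (s - x) * (A + RtoC x * B))%C
      with (RtoC ((s - x) * (s - x) / 2) * B)%C by cring.
    rewrite Cmod_mult, Cmod_R.
    pose proof (Cmod_ge_0 B).
    rewrite Rabs_pos_eq by (apply Rmult_le_pos; [apply Rle_0_sqr| lra]).
    replace ((s - x) * (s - x) / 2) with (Rabs (s - x) * Rabs (s - x) / 2)
      by (rewrite <- Rabs_mult, Rabs_pos_eq by apply Rle_0_sqr; reflexivity).
    pose proof (Rabs_pos (s - x)).
    apply Rmult_lt_compat_r with (r := Cmod B + 1) in Hs; [|lra].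
    replace (eps / (Cmod B + 1) * (Cmod B + 1)) with eps in Hs by (field; lra).
    nra.
  - intros x _. apply contR_of_eps. intros eps Heps.
    exists (eps / (Cmod B + 1)). split. apply Rdiv_lt_0_compat; [lra|pose proof (Cmod_ge_0 B); lra].
    intros s Hs.
    replace (A + RtoC s * B - (A + RtoC x * B))%C with (RtoC (s - x) * B)%C by cring.
    rewrite Cmod_mult, Cmod_R.
    pose proof (Cmod_ge_0 B).
    apply Rmult_lt_compat_r with (r := Cmod B + 1) in Hs; [|lra].
    replace (eps / (Cmod B + 1) * (Cmod B + 1)) with eps in Hs by (field; lra).
    pose proof (Rabs_pos (s - x)). nra.
Qed.

Lemma tri_affine al be a b c : tri (fun z => al + be * z)%C a b c = 0%C.
Proof. unfold tri. rewrite !seg_affine. cring. Qed.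

Lemma seg_bound f p q M : contH f -> 0 < Im p -> 0 < Im q ->
  (forall t, 0 <= t <= 1 -> Cmod (f (p + RtoC t * (q - p))%C) <= M) ->
  Cmod (seg f p q) <= Cmod (q - p) * M.
Proof.
  intros Hf Hp Hq HM. unfold seg. rewrite <- normCR.
  apply Rle_trans with ((1 - 0) * (M * Cmod (q - p))).
  apply (@norm_RInt_le_const C_R_NormedModule (fun t : R => (f (p + RtoC t * (q - p))%C * (q - p))%C) 0 1). lra.
  intros x Hx. rewrite normCR, Cmod_mult. apply Rmult_le_compat_r. apply Cmod_ge_0. apply HM; lra.
  apply (@RInt_correct C_R_CompleteNormedModule). apply seg_exint; auto; lra.
  right; ring.
Qed.

Lemma contH_affine al be : contH (fun z => al + be * z)%C.
Proof.
  intros z _ eps Heps. exists (eps / (Cmod be + 1)). pose proof (Cmod_ge_0 be).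
  split. apply Rdiv_lt_0_compat; lra.
  intros w Hw. replace (al + be * w - (al + be * z))%C with (be * (w - z))%C by cring.
  rewrite Cmod_mult. pose proof (Cmod_ge_0 (w - z)).
  apply Rmult_lt_compat_r with (r := Cmod be + 1) in Hw; [|lra].
  replace (eps / (Cmod be + 1) * (Cmod be + 1)) with eps in Hw by (field; lra). nra.
Qed.

Lemma seg_minus f g p q : contH f -> contH g -> 0 < Im p -> 0 < Im q ->
  seg (fun z => f z - g z)%C p q = (seg f p q - seg g p q)%C.
Proof.
  intros Hf Hg Hp Hq. unfold seg.
  set (F := fun t : R => (f (p + RtoC t * (q - p))%C * (q - p))%C).
  set (G := fun t : R => (g (p + RtoC t * (q - p))%C * (q - p))%C).
  transitivity (@RInt C_R_CompleteNormedModule (fun x => @minus C_R_NormedModule (F x) (G x)) 0 1).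
  - apply (@RInt_ext C_R_CompleteNormedModule). intros x _.
    change (@minus C_R_NormedModule (F x) (G x)) with (Cminus (F x) (G x)).
    unfold F, G. set (u := f _). set (v := g _). cring.
  - apply (@RInt_minus C_R_CompleteNormedModule); apply seg_exint; auto; lra.
Qed.




Lemma cauchy_geom (x : nat -> R) K : 0 <= K ->
  (forall n, Rabs (x (S n) - x n) <= K * (/2)^n) ->
  exists l, forall n, Rabs (x n - l) <= 2 * K * (/2)^n.
Proof.
  intros HK H.
  set (u := fun n => x n - 2 * K * (/2)^n).
  set (v := fun n => x n + 2 * K * (/2)^n).
  assert (Hpow : forall n, 0 < (/2)^n) by (intros; apply pow_lt; lra).
  assert (Hu : Un_growing u).
  { intros n. unfold u. simpl. specialize (H n). apply Rabs_le_between in H.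
    pose proof (Hpow n). nra. }
  assert (Hv : Un_decreasing v).
  { intros n. unfold v. simpl. specialize (H n). apply Rabs_le_between in H.
    pose proof (Hpow n). nra. }
  assert (Huv : forall m n, u m <= v n).
  { intros m n. destruct (le_lt_dec m n) as [Hmn|Hmn].
    - apply Rle_trans with (u n). apply Rge_le, growing_prop; auto.
      unfold u, v. pose proof (Hpow n). nra.
    - apply Rle_trans with (v m). unfold u, v. pose proof (Hpow m). nra.
      apply decreasing_prop; auto. lia. }
  set (E := fun y => exists n, y = u n).
  assert (HE : bound E) by (exists (v 0%nat); intros y [n ->]; apply Huv).
  destruct (completeness E HE) as [l [Hl1 Hl2]]. exists (u 0%nat); exists 0%nat; reflexivity.
  exists l. intros n.
  assert (A : u n <= l) by (apply Hl1; exists n; reflexivity).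
  assert (B : l <= v n) by (apply Hl2; intros y [m ->]; apply Huv).
  unfold u, v in *. apply Rabs_le. split; lra.
Qed.

Definition trg := (C * C * C)%type.
Definition T f (t : trg) : C := let '(a, b, c) := t in tri f a b c.
Definition va (t : trg) : C := let '(a, _, _) := t in a.
Definition per (t : trg) : R := let '(a, b, c) := t in
  Cmod (b - a)%C + Cmod (c - b)%C + Cmod (a - c)%C.
Definition good (m : R) (t : trg) : Prop := let '(a, b, c) := t in
  m <= Im a /\ m <= Im b /\ m <= Im c.

Definition sub1 (t : trg) : trg := let '(a, b, c) := t in (a, mid a b, mid c a).
Definition sub2 (t : trg) : trg := let '(a, b, c) := t in (mid a b, b, mid b c).
Definition sub3 (t : trg) : trg := let '(a, b, c) := t in (mid c a, mid b c, c).
Definition sub4 (t : trg) : trg := let '(a, b, c) := t in (mid a b, mid b c, mid c a).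

Definition step f (t : trg) : trg :=
  if Rle_dec (Cmod (T f t) / 4) (Cmod (T f (sub1 t))) then sub1 t else
  if Rle_dec (Cmod (T f t) / 4) (Cmod (T f (sub2 t))) then sub2 t else
  if Rle_dec (Cmod (T f t) / 4) (Cmod (T f (sub3 t))) then sub3 t else sub4 t.

Lemma half_eq r x y : x = (RtoC r * y)%C -> Rabs r = /2 -> Cmod x = /2 * Cmod y.
Proof. intros -> Hr. rewrite Cmod_mult, Cmod_R, Hr. reflexivity. Qed.

Lemma step_cases f t : step f t = sub1 t \/ step f t = sub2 t \/ step f t = sub3 t \/ step f t = sub4 t.
Proof. unfold step. repeat destruct Rle_dec; tauto. Qed.

Lemma step_good f m t : good m t -> good m (step f t).
Proof.
  intros H. destruct t as [[a b] c]. simpl in H.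
  destruct (step_cases f (a, b, c)) as [E|[E|[E|E]]]; rewrite E; unfold good, sub1, sub2, sub3, sub4; cbv beta iota; rewrite ?im_mid; destruct H as [? [? ?]]; repeat split; lra.
Qed.

Lemma step_per f t : per (step f t) = per t / 2.
Proof.
  destruct t as [[a b] c].
  assert (Hh : Rabs (/2) = /2) by (apply Rabs_pos_eq; lra).
  assert (Hh' : Rabs (-/2) = /2) by (rewrite Rabs_Ropp; exact Hh).
  destruct (step_cases f (a, b, c)) as [E|[E|[E|E]]]; rewrite E; unfold per, sub1, sub2, sub3, sub4; cbv beta iota.
  - rewrite (half_eq (/2) (mid a b - a) (b - a)%C), (half_eq (/2) (mid c a - mid a b) (c - b)%C),
      (half_eq (/2) (a - mid c a) (a - c)%C); auto; try (unfold mid; cring). field.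
  - rewrite (half_eq (/2) (b - mid a b) (b - a)%C), (half_eq (/2) (mid b c - b) (c - b)%C),
      (half_eq (/2) (mid a b - mid b c) (a - c)%C); auto; try (unfold mid; cring). field.
  - rewrite (half_eq (/2) (mid b c - mid c a) (b - a)%C), (half_eq (/2) (c - mid b c) (c - b)%C),
      (half_eq (/2) (mid c a - c) (a - c)%C); auto; try (unfold mid; cring). field.
  - rewrite (half_eq (-/2) (mid b c - mid a b) (a - c)%C), (half_eq (-/2) (mid c a - mid b c) (b - a)%C),
      (half_eq (-/2) (mid a b - mid c a) (c - b)%C); auto; try (unfold mid; cring). field.
Qed.

Lemma step_T f m t : contH f -> 0 < m -> good m t ->
  Cmod (T f t) / 4 <= Cmod (T f (step f t)).
Proof.
  intros Hf Hm Hg. destruct t as [[a b] c]. destruct Hg as [Ha [Hb Hc]].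
  unfold step.
  destruct Rle_dec as [H1|H1]; [exact H1|].
  destruct Rle_dec as [H2|H2]; [exact H2|].
  destruct Rle_dec as [H3|H3]; [exact H3|].
  apply Rnot_le_lt in H1, H2, H3.
  assert (E : T f (a, b, c) = (T f (sub1 (a,b,c)) + T f (sub2 (a,b,c)) + T f (sub3 (a,b,c)) + T f (sub4 (a,b,c)))%C).
  { unfold T, sub1, sub2, sub3, sub4. cbv beta iota. apply tri_subdiv; auto; lra. }
  pose proof (Cmod_triangle (T f (sub1 (a,b,c)) + T f (sub2 (a,b,c)) + T f (sub3 (a,b,c))) (T f (sub4 (a,b,c)))).
  pose proof (Cmod_triangle (T f (sub1 (a,b,c)) + T f (sub2 (a,b,c))) (T f (sub3 (a,b,c)))).
  pose proof (Cmod_triangle (T f (sub1 (a,b,c))) (T f (sub2 (a,b,c)))).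
  rewrite <- E in H. lra.
Qed.

Lemma step_va f t : Cmod (va (step f t) - va t) <= per t.
Proof.
  destruct t as [[a b] c].
  assert (Hh : Rabs (/2) = /2) by (apply Rabs_pos_eq; lra).
  pose proof (Cmod_ge_0 (b - a)). pose proof (Cmod_ge_0 (c - b)). pose proof (Cmod_ge_0 (a - c)).
  destruct (step_cases f (a, b, c)) as [E|[E|[E|E]]]; rewrite E; unfold per, va, sub1, sub2, sub3, sub4; cbv beta iota.
  - replace (a - a)%C with (RtoC 0) by cring. rewrite Cmod_0. lra.
  - rewrite (half_eq (/2) (mid a b - a) (b - a)%C); auto; [lra|unfold mid; cring].
  - rewrite (half_eq (/2) (mid c a - a) (c - a)%C); auto; [|unfold mid; cring].
    replace (c - a)%C with (- (a - c))%C by cring. rewrite Cmod_opp. lra.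
  - rewrite (half_eq (/2) (mid a b - a) (b - a)%C); auto; [lra|unfold mid; cring].
Qed.

Lemma segpt_bound u v a s : 0 <= s <= 1 ->
  Cmod (u + RtoC s * (v - u) - a)%C <= Cmod (u - a) + Cmod (v - u).
Proof.
  intros Hs. replace (u + RtoC s * (v - u) - a)%C with ((u - a) + RtoC s * (v - u))%C by cring.
  eapply Rle_trans. apply Cmod_triangle. rewrite Cmod_mult, Cmod_R, Rabs_pos_eq by lra.
  pose proof (Cmod_ge_0 (v - u)). nra.
Qed.

Lemma contH_minus f g : contH f -> contH g -> contH (fun z => f z - g z)%C.
Proof.
  intros Hf Hg z Hz eps Heps.
  destruct (Hf z Hz (eps/2)) as [d1 [Hd1 H1]]; [lra|].
  destruct (Hg z Hz (eps/2)) as [d2 [Hd2 H2]]; [lra|].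
  exists (Rmin d1 d2). split. apply Rmin_pos; lra.
  intros w Hw.
  replace (f w - g w - (f z - g z))%C with ((f w - f z) + - (g w - g z))%C
    by (set (a1 := f w); set (a2 := f z); set (a3 := g w); set (a4 := g z); cring).
  eapply Rle_lt_trans. apply Cmod_triangle. rewrite Cmod_opp.
  assert (Cmod (w - z) < d1) by (eapply Rlt_le_trans; [exact Hw| apply Rmin_l]).
  assert (Cmod (w - z) < d2) by (eapply Rlt_le_trans; [exact Hw| apply Rmin_r]).
  specialize (H1 w H). specialize (H2 w H0). lra.
Qed.

Lemma holo_contH f : (forall z, 0 < Im z -> ex_derive f z) -> contH f.
Proof. intros H z Hz. apply exd_cont. auto. Qed.

Lemma sqrt2_le_2 : sqrt 2 <= 2.
Proof. pose proof (sqrt_sqrt 2 ltac:(lra)). pose proof sqrt2_pos. nra. Qed.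

Lemma Cmod_le_sum (w : C) : Cmod w <= 2 * Rmax (Rabs (Re w)) (Rabs (Im w)).
Proof.
  eapply Rle_trans. apply Cmod_2Rmax. apply Rmult_le_compat_r.
  eapply Rle_trans. apply Rabs_pos. apply Rmax_l. apply sqrt2_le_2.
Qed.

Lemma im_le_Cmod (w : C) : Rabs (Im w) <= Cmod w.
Proof. eapply Rle_trans; [|apply Rmax_Cmod]. apply Rmax_r. Qed.

Lemma small_pow (y : R) : 0 < y -> exists n, (/2)^n < y.
Proof.
  intros Hy. destruct (pow_lt_1_zero (/2) ltac:(rewrite Rabs_pos_eq; lra) y Hy) as [N HN].
  exists N. specialize (HN N (le_n N)). rewrite Rabs_pos_eq in HN. exact HN.
  apply pow_le; lra.
Qed.

Theorem goursat f : (forall z, 0 < Im z -> ex_derive f z) ->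
  forall a b c, 0 < Im a -> 0 < Im b -> 0 < Im c -> tri f a b c = RtoC 0.
Proof.
  intros Hd a b c Ha Hb Hc.
  pose proof (holo_contH f Hd) as Hf.
  set (m := Rmin (Im a) (Rmin (Im b) (Im c))).
  assert (Hm : 0 < m) by (unfold m; repeat apply Rmin_pos; auto).
  set (t0 := (a, b, c) : trg).
  set (tn := fun n => Nat.iter n (step f) t0).
  set (P := per t0).
  assert (HP : 0 <= P) by (unfold P, t0, per; pose proof (Cmod_ge_0 (b - a)); pose proof (Cmod_ge_0 (c - b)); pose proof (Cmod_ge_0 (a - c)); lra).
  assert (F1 : forall n, good m (tn n)).
  { induction n. change (tn 0%nat) with t0. unfold good, t0, m. repeat split.
    apply Rmin_l. eapply Rle_trans; [apply Rmin_r|apply Rmin_l]. eapply Rle_trans; [apply Rmin_r|apply Rmin_r].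
    change (tn (S n)) with (step f (tn n)). apply step_good; auto. }
  assert (F2 : forall n, per (tn n) = P * (/2)^n).
  { induction n. change (tn 0%nat) with t0. fold P. simpl. ring. change (tn (S n)) with (step f (tn n)). rewrite step_per, IHn. simpl. field. }
  assert (F3 : forall n, Cmod (T f t0) * ((/2)^n * (/2)^n) <= Cmod (T f (tn n))).
  { induction n. change (tn 0%nat) with t0. simpl. lra. change (tn (S n)) with (step f (tn n)).
    eapply Rle_trans; [|apply (step_T f m); auto]. change ((/2)^(S n)) with (/2 * (/2)^n).
    replace (Cmod (T f t0) * (/ 2 * (/ 2) ^ n * (/ 2 * (/ 2) ^ n))) with
      (Cmod (T f t0) * ((/2)^n * (/2)^n) / 4) by field. lra. }
  assert (F4 : forall n, Cmod (va (tn (S n)) - va (tn n)) <= P * (/2)^n).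
  { intros n. rewrite <- F2. change (tn (S n)) with (step f (tn n)). apply step_va. }
  destruct (cauchy_geom (fun n => Re (va (tn n))) P HP) as [lr Hlr].
  { intros n. eapply Rle_trans; [|apply F4].
    set (A := va (tn (S n))). set (B := va (tn n)).
    replace (Re A - Re B) with (Re (A - B)) by (destruct A, B; simpl; ring). apply re_le_Cmod. }
  destruct (cauchy_geom (fun n => Im (va (tn n))) P HP) as [li Hli].
  { intros n. eapply Rle_trans; [|apply F4].
    set (A := va (tn (S n))). set (B := va (tn n)).
    replace (Im A - Im B) with (Im (A - B)) by (destruct A, B; simpl; ring). apply im_le_Cmod. }
  set (z0 := (lr, li) : C).
  assert (Hz0 : forall n, Cmod (va (tn n) - z0) <= 4 * P * (/2)^n).
  { intros n. eapply Rle_trans. apply Cmod_le_sum.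
    set (A := va (tn n)).
    replace (Re (A - z0)) with (Re A - lr) by (unfold z0; destruct A; simpl; ring).
    replace (Im (A - z0)) with (Im A - li) by (unfold z0; destruct A; simpl; ring).
    specialize (Hlr n). specialize (Hli n). simpl in Hlr, Hli.
    unfold A; apply Rmax_case_strong; intros _; lra. }
  assert (Himz0 : 0 < Im z0).
  { destruct (small_pow (m / (4 * (P + 1)))) as [n Hn].
    apply Rdiv_lt_0_compat; lra.
    specialize (Hli n). simpl in Hli. apply Rabs_le_between in Hli.
    assert (Hg : m <= Im (va (tn n))) by (specialize (F1 n); destruct (tn n) as [[x y] w]; simpl in *; tauto).
    assert (Hr : 0 < (/2)^n) by (apply pow_lt; lra).
    assert (2 * P * (/2)^n <= m / 2).
    { apply Rmult_lt_compat_l with (r := 4 * (P + 1)) in Hn; [|lra].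
      replace (4 * (P + 1) * (m / (4 * (P + 1)))) with m in Hn by (field; lra). nra. }
    unfold z0; simpl. lra. }
  destruct (Hd z0 Himz0) as [l0 Hl0].
  assert (Main : forall eps, 0 < eps -> Cmod (T f t0) <= 6 * eps * (P * P)).
  { intros eps Heps.
    destruct (is_derive_eps f z0 l0 Hl0 eps Heps) as [del [Hdel Hde]].
    destruct (small_pow (del / (6 * (P + 1)))) as [n Hn].
    apply Rdiv_lt_0_compat; lra.
    set (r := (/2)^n) in *.
    assert (Hr : 0 < r) by (apply pow_lt; lra).
    assert (H6 : 6 * P * r < del).
    { apply Rmult_lt_compat_l with (r := 6 * (P + 1)) in Hn; [|lra].
      replace (6 * (P + 1) * (del / (6 * (P + 1)))) with del in Hn by (field; lra). nra. }
    set (al := (f z0 - l0 * z0)%C). set (be := l0).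
    set (g := fun z => (f z - (al + be * z))%C).
    assert (Hg : contH g) by (apply contH_minus; [exact Hf| apply contH_affine]).
    pose proof (F1 n) as G1. pose proof (F2 n) as G2. pose proof (F3 n) as G3. pose proof (Hz0 n) as G4.
    fold r in G2, G3, G4.
    destruct (tn n) as [[x y] w].
    simpl in G1, G2, G4. destruct G1 as [Gx [Gy Gw]].
    assert (Eq : T f (x, y, w) = tri g x y w).
    { unfold g, T. unfold tri. rewrite !seg_minus; auto using contH_affine; try lra.
      pose proof (tri_affine al be x y w) as TA. unfold tri in TA.
      set (s1 := seg f x y) in *. set (s2 := seg f y w) in *. set (s3 := seg f w x) in *.
      set (u1 := seg _ x y) in *. set (u2 := seg _ y w) in *. set (u3 := seg _ w x) in *.
      clearbody s1 s2 s3 u1 u2 u3.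
      assert (E1 : u1 = ((u1 + u2 + u3) - u2 - u3)%C) by cring. rewrite TA in E1. rewrite E1. cring. }
    assert (Bnd : forall u v, 0 < Im u -> 0 < Im v -> Cmod (u - x) <= P * r -> Cmod (v - u) <= P * r ->
      Cmod (seg g u v) <= Cmod (v - u) * (eps * (6 * P * r))).
    { intros u v Hu Hv Hux Hvu. apply seg_bound; auto.
      intros s Hs. set (pt := (u + RtoC s * (v - u))%C).
      assert (Hpt : Cmod (pt - z0) <= 6 * P * r).
      { replace (pt - z0)%C with ((pt - x) + (x - z0))%C by (unfold pt; cring).
        eapply Rle_trans. apply Cmod_triangle.
        pose proof (segpt_bound u v x s Hs). fold pt in H. lra. }
      replace (g pt) with (f pt - f z0 - (pt - z0) * l0)%C by (unfold g, al, be; set (k1 := f pt); set (k2 := f z0); cring).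
      eapply Rle_trans. apply Hde. lra. apply Rmult_le_compat_l; lra. }
    assert (Hxy : Cmod (y - x) <= P * r) by (pose proof (Cmod_ge_0 (w - y)); pose proof (Cmod_ge_0 (x - w)); lra).
    assert (Hwy : Cmod (w - y) <= P * r) by (pose proof (Cmod_ge_0 (y - x)); pose proof (Cmod_ge_0 (x - w)); lra).
    assert (Hxw : Cmod (x - w) <= P * r) by (pose proof (Cmod_ge_0 (y - x)); pose proof (Cmod_ge_0 (w - y)); lra).
    assert (Hwx : Cmod (w - x) <= P * r) by (replace (w - x)%C with (- (x - w))%C by cring; rewrite Cmod_opp; lra).
    assert (Hxx : Cmod (x - x) <= P * r) by (replace (x - x)%C with (RtoC 0) by cring; rewrite Cmod_0; nra).
    pose proof (Bnd x y ltac:(lra) ltac:(lra) Hxx Hxy) as B1.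
    pose proof (Bnd y w ltac:(lra) ltac:(lra) Hxy Hwy) as B2.
    pose proof (Bnd w x ltac:(lra) ltac:(lra) Hwx Hxw) as B3.
    assert (HT : Cmod (T f (x, y, w)) <= (P * r) * (eps * (6 * P * r))).
    { rewrite Eq. unfold tri. eapply Rle_trans. apply Cmod_triangle.
      eapply Rle_trans. apply Rplus_le_compat_r. apply Cmod_triangle.
      rewrite <- G2. nra. }
    assert (Cmod (T f t0) * (r * r) <= (6 * eps * (P * P)) * (r * r)) by nra.
    apply Rmult_le_reg_r with (r * r). nra. exact H. }
  apply Cmod_eq_0.
  pose proof (Cmod_ge_0 (T f t0)).
  destruct (Req_dec (Cmod (T f t0)) 0) as [E|E]. exact E.
  exfalso.
  set (e := Cmod (T f t0) / (12 * (P * P) + 1)).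
  assert (He : 0 < e) by (unfold e; apply Rdiv_lt_0_compat; nra).
  specialize (Main e He). unfold e in Main.
  assert (6 * (Cmod (T f t0) / (12 * (P * P) + 1)) * (P * P) < Cmod (T f t0)).
  { apply Rmult_lt_reg_r with (12 * (P * P) + 1). nra.
    replace (6 * (Cmod (T f t0) / (12 * (P * P) + 1)) * (P * P) * (12 * (P * P) + 1))
      with (6 * Cmod (T f t0) * (P * P)) by (field; nra). nra. }
  lra.
Qed.




Lemma Ci_H : 0 < Im Ci.
Proof. simpl. lra. Qed.

Lemma prim_diff f : (forall z, 0 < Im z -> ex_derive f z) ->
  forall tau w, 0 < Im tau -> 0 < Im w ->
  (prim_from_i f w - prim_from_i f tau)%C = seg f tau w.
Proof.
  intros Hd tau w Ht Hw. rewrite !prim_seg.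
  pose proof (goursat f Hd Ci tau w Ci_H Ht Hw) as G. unfold tri in G.
  rewrite (seg_swap f Ci w) in G by (auto using holo_contH, Ci_H).
  set (s1 := seg f Ci tau) in *. set (s2 := seg f tau w) in *. set (s3 := seg f Ci w) in *.
  clearbody s1 s2 s3.
  assert (E : s2 = ((s1 + s2 + - s3) - s1 + s3)%C) by cring. rewrite G in E. rewrite E. cring.
Qed.

Lemma prim_derive f : (forall z, 0 < Im z -> ex_derive f z) ->
  forall tau, 0 < Im tau -> @is_derive C_AbsRing C_NormedModule (prim_from_i f) tau (f tau).
Proof.
  intros Hd tau Ht. pose proof (holo_contH f Hd) as Hf.
  apply is_derive_of_eps. intros eps Heps.
  destruct (Hf tau Ht eps Heps) as [del [Hdel H]].
  exists (Rmin del (Im tau)). split. apply Rmin_pos; lra.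
  intros w Hw.
  assert (Hw1 : Cmod (w - tau) < del) by (eapply Rlt_le_trans; [exact Hw|apply Rmin_l]).
  assert (Hw2 : Cmod (w - tau) < Im tau) by (eapply Rlt_le_trans; [exact Hw|apply Rmin_r]).
  assert (HwH : 0 < Im w).
  { pose proof (im_le_Cmod (w - tau)). apply Rabs_le_between in H0.
    replace (Im (w - tau)) with (Im w - Im tau) in H0 by (destruct w, tau; simpl; ring). lra. }
  rewrite (prim_diff f Hd tau w Ht HwH).
  set (g := fun z => (f z - (f tau + RtoC 0 * z))%C).
  assert (E : (seg f tau w - (w - tau) * f tau)%C = seg g tau w).
  { unfold g. rewrite seg_minus; auto using contH_affine. rewrite seg_affine.
    set (s := seg f tau w). set (u := f tau). cring. }
  rewrite E. rewrite Rmult_comm. apply seg_bound; auto.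
  apply contH_minus; auto using contH_affine.
  intros t Htt. unfold g.
  set (pt := (tau + RtoC t * (w - tau))%C).
  replace (f pt - (f tau + RtoC 0 * pt))%C with (f pt - f tau)%C by (set (a1 := f pt); set (a2 := f tau); cring).
  left. apply H.
  replace (pt - tau)%C with (RtoC t * (w - tau))%C by (unfold pt; cring).
  rewrite Cmod_mult, Cmod_R, Rabs_pos_eq by lra.
  pose proof (Cmod_ge_0 (w - tau)). nra.
Qed.

Lemma sl2_R g : in_SL2Z g -> IZR (zmA g) * IZR (zmD g) - IZR (zmB g) * IZR (zmC g) = 1.
Proof. unfold in_SL2Z. intros H. rewrite <- !mult_IZR, <- minus_IZR, H. reflexivity. Qed.

Lemma sl2_C g : in_SL2Z g ->
  (RtoC (IZR (zmA g)) * RtoC (IZR (zmD g)) - RtoC (IZR (zmB g)) * RtoC (IZR (zmC g)))%C = RtoC 1.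
Proof. intros H. rewrite <- !RtoC_mult, <- RtoC_minus, sl2_R; auto. Qed.

Lemma jfac_nz g tau : in_SL2Z g -> 0 < Im tau -> jfac g tau <> RtoC 0.
Proof.
  intros Hg Ht E. pose proof (sl2_R g Hg) as Hr. unfold in_SL2Z in Hg.
  destruct g as [[[a b] c] d]. unfold jfac in E. simpl in *.
  destruct tau as [x y]. simpl in Ht.
  pose proof (f_equal snd E) as E2. pose proof (f_equal fst E) as E1. simpl in E1, E2.
  assert (Hc : IZR c = 0) by nra.
  rewrite Hc in E1. assert (Hd : IZR d = 0) by lra.
  apply eq_IZR_R0 in Hc. apply eq_IZR_R0 in Hd. subst. lia.
Qed.

Lemma im_mobius g tau : in_SL2Z g -> 0 < Im tau -> 0 < Im (zmobius g tau).
Proof.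
  intros Hg Ht. pose proof (jfac_nz g tau Hg Ht) as Hj. pose proof (sl2_R g Hg) as Hr.
  destruct g as [[[a b] c] d]. unfold jfac, zmobius in *. cbn [zmA zmB zmC zmD] in *.
  destruct tau as [x y]. simpl in Ht.
  assert (Hden : (IZR c * x + IZR d) ^ 2 + (IZR c * y) ^ 2 <> 0).
  { intro E. pose proof (pow2_ge_0 (IZR c * x + IZR d)). pose proof (pow2_ge_0 (IZR c * y)).
    assert (E1 : (IZR c * x + IZR d) ^ 2 = 0) by lra. assert (E2 : (IZR c * y) ^ 2 = 0) by lra.
    assert (IZR c * x + IZR d = 0) by nra. assert (IZR c * y = 0) by nra.
    apply Hj. apply injective_projections; simpl; lra. }
  assert (Hpos : 0 < (IZR c * x + IZR d) ^ 2 + (IZR c * y) ^ 2).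
  { pose proof (pow2_ge_0 (IZR c * x + IZR d)). pose proof (pow2_ge_0 (IZR c * y)). lra. }
  match goal with |- 0 < Im ?t => replace (Im t) with (y * (IZR a * IZR d - IZR b * IZR c) / ((IZR c * x + IZR d) ^ 2 + (IZR c * y) ^ 2)) end.
  rewrite Hr. apply Rdiv_lt_0_compat; lra.
  simpl. field. intro E. apply Hden. rewrite <- E. ring.
Qed.

Lemma mobius_diff g tau w : in_SL2Z g -> jfac g tau <> RtoC 0 -> jfac g w <> RtoC 0 ->
  (zmobius g w - zmobius g tau)%C = ((w - tau) / (jfac g w * jfac g tau))%C.
Proof.
  intros Hg Ht Hw. pose proof (sl2_C g Hg) as Hc.
  destruct g as [[[a b] c] d]. unfold zmobius, jfac in *. cbn [zmA zmB zmC zmD] in *.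
  set (A := RtoC (IZR a)) in *. set (B := RtoC (IZR b)) in *.
  set (Cc := RtoC (IZR c)) in *. set (D := RtoC (IZR d)) in *.
  clearbody A B Cc D.
  transitivity ((w - tau) * (A * D - B * Cc) / ((Cc * w + D) * (Cc * tau + D)))%C.
  field; split; auto.
  rewrite Hc. field; split; auto.
Qed.

Lemma mobius_derive g tau : in_SL2Z g -> 0 < Im tau ->
  @is_derive C_AbsRing (AbsRing_NormedModule C_AbsRing) (zmobius g) tau (/ (jfac g tau * jfac g tau))%C.
Proof.
  intros Hg Ht. pose proof (jfac_nz g tau Hg Ht) as Hj.
  apply is_derive_of_eps2. intros eps Heps.
  set (Jt := jfac g tau) in *. set (c := RtoC (IZR (zmC g))).
  set (K := Cmod Jt). set (Cm := Cmod c).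
  assert (HK : 0 < K) by (apply Cmod_gt_0; exact Hj).
  assert (HCm : 0 <= Cm) by apply Cmod_ge_0.
  exists (Rmin (K / (2 * (Cm + 1))) (eps * (K * K * K) / (2 * (Cm + 1)))).
  split. { apply Rmin_pos; apply Rdiv_lt_0_compat; repeat apply Rmult_lt_0_compat; lra. }
  intros w Hw.
  assert (Hw1 : Cmod (w - tau) < K / (2 * (Cm + 1))) by (eapply Rlt_le_trans; [exact Hw|apply Rmin_l]).
  assert (Hw2 : Cmod (w - tau) < eps * (K * K * K) / (2 * (Cm + 1))) by (eapply Rlt_le_trans; [exact Hw|apply Rmin_r]).
  set (r := Cmod (w - tau)) in *.
  assert (Hr : 0 <= r) by apply Cmod_ge_0.
  assert (EJ : jfac g w = (Jt + c * (w - tau))%C) by (unfold Jt, c, jfac; cring).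
  assert (HJw : K / 2 <= Cmod (jfac g w)).
  { rewrite EJ.
    assert (Cmod Jt <= Cmod (Jt + c * (w - tau)) + Cmod (c * (w - tau))).
    { replace Jt with ((Jt + c * (w - tau)) + - (c * (w - tau)))%C at 1 by cring.
      rewrite <- (Cmod_opp (c * (w - tau))). apply Cmod_triangle. }
    rewrite Cmod_mult in H. fold K Cm r in H.
    assert (Cm * r <= K / 2).
    { apply Rmult_lt_compat_l with (r := 2 * (Cm + 1)) in Hw1; [|lra].
      replace (2 * (Cm + 1) * (K / (2 * (Cm + 1)))) with K in Hw1 by (field; lra). nra. }
    lra. }
  assert (HJw0 : jfac g w <> RtoC 0).
  { intro E. rewrite E, Cmod_0 in HJw. lra. }
  rewrite (mobius_diff g tau w Hg Hj HJw0). fold Jt.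
  replace ((w - tau) / (jfac g w * Jt) - (w - tau) * / (Jt * Jt))%C
    with (- (c * ((w - tau) * (w - tau))) / (jfac g w * (Jt * Jt)))%C.
  2:{ rewrite EJ. field. split; auto. rewrite <- EJ. auto. }
  rewrite Cmod_div.
  2:{ apply Cmult_neq_0; auto. apply Cmult_neq_0; auto. }
  rewrite Cmod_opp, !Cmod_mult. fold K Cm r.
  set (Jw := Cmod (jfac g w)) in *.
  assert (HJK : 0 < Jw * (K * K)) by (apply Rmult_lt_0_compat; [lra| apply Rmult_lt_0_compat; lra]).
  apply Rmult_le_reg_r with (Jw * (K * K)). exact HJK.
  replace (Cm * (r * r) / (Jw * (K * K)) * (Jw * (K * K))) with (Cm * (r * r)) by (field; lra).
  assert (Cm * r * 2 <= eps * (K * K * K)).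
  { apply Rmult_lt_compat_l with (r := 2 * (Cm + 1)) in Hw2; [|lra].
    replace (2 * (Cm + 1) * (eps * (K * K * K) / (2 * (Cm + 1)))) with (eps * (K * K * K)) in Hw2 by (field; lra).
    nra. }
  assert (0 <= eps * r * (K * K)) by (apply Rmult_le_pos; nra).
  nra.
Qed.

Lemma prim_Ci f : prim_from_i f Ci = RtoC 0.
Proof.
  rewrite prim_seg. unfold seg.
  rewrite (@RInt_ext C_R_CompleteNormedModule _ (fun _ => RtoC 0)).
  rewrite (@RInt_const C_R_CompleteNormedModule). rewrite scal_R_Cmult. cring.
  intros x _. set (u := f _). cring.
Qed.

Lemma const_of_deriv0 (G : C -> C) :
  (forall z, 0 < Im z -> @is_derive C_AbsRing C_NormedModule G z (RtoC 0)) ->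
  forall tau, 0 < Im tau -> G tau = G Ci.
Proof.
  intros GD tau Ht.
  set (d := (tau - Ci)%C).
  set (Psi := fun t : R => G (Ci + RtoC t * d)%C).
  assert (HD : forall t, 0 <= t <= 1 -> @is_derive R_AbsRing C_R_NormedModule Psi t (RtoC 0)).
  { intros t Htt. apply is_deriveR_of_eps. intros eps Heps.
    assert (Hpt : 0 < Im (Ci + RtoC t * (tau - Ci))%C) by (apply segpt_pos; auto using Ci_H).
    pose proof (Cmod_ge_0 d).
    destruct (is_derive_eps G _ _ (GD _ Hpt) (eps / (Cmod d + 1))) as [del [Hdel HH]].
    apply Rdiv_lt_0_compat; lra.
    exists (del / (Cmod d + 1)). split. apply Rdiv_lt_0_compat; lra.
    intros s Hs. unfold Psi.
    fold d in HH.
    assert (Eq : (Ci + RtoC s * d - (Ci + RtoC t * d))%C = (RtoC (s - t) * d)%C) by cring.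
    assert (Hm : Cmod (Ci + RtoC s * d - (Ci + RtoC t * d))%C = Rabs (s - t) * Cmod d)
      by (rewrite Eq, Cmod_mult, Cmod_R; reflexivity).
    replace (G (Ci + RtoC s * d)%C - G (Ci + RtoC t * d)%C - RtoC (s - t) * RtoC 0)%C
      with (G (Ci + RtoC s * d)%C - G (Ci + RtoC t * d)%C - (Ci + RtoC s * d - (Ci + RtoC t * d)) * RtoC 0)%C
      by (set (a1 := G _); set (a2 := G _); cring).
    pose proof (Rabs_pos (s - t)).
    eapply Rle_trans. apply HH.
    rewrite Hm. apply Rmult_lt_compat_r with (r := Cmod d + 1) in Hs; [|lra].
    replace (del / (Cmod d + 1) * (Cmod d + 1)) with del in Hs by (field; lra). nra.
    rewrite Hm.
    replace (eps / (Cmod d + 1) * (Rabs (s - t) * Cmod d)) with (eps * Rabs (s - t) * (Cmod d / (Cmod d + 1))) by (field; lra).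
    assert (Cmod d / (Cmod d + 1) <= 1) by (apply Rmult_le_reg_r with (Cmod d + 1); [lra|]; unfold Rdiv; rewrite Rmult_assoc, Rinv_l by lra; lra).
    assert (0 <= eps * Rabs (s - t)) by nra. nra. }
  pose proof (@is_RInt_derive C_R_CompleteNormedModule Psi (fun _ => RtoC 0) 0 1) as HI.
  assert (HI' : @is_RInt C_R_NormedModule (fun _ => RtoC 0) 0 1 (Psi 1 - Psi 0)%C).
  { apply HI. intros x Hx. rewrite Rmin_left, Rmax_right in Hx by lra. apply HD; lra.
    intros x _. apply continuous_const. }
  apply (@is_RInt_unique C_R_CompleteNormedModule) in HI'.
  rewrite (@RInt_const C_R_CompleteNormedModule), scal_R_Cmult in HI'.
  assert (E1 : Psi 1 = G tau) by (unfold Psi, d; f_equal; cring).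
  assert (E0 : Psi 0 = G Ci) by (unfold Psi, d; f_equal; cring).
  rewrite E1, E0 in HI'.
  set (u := G tau) in *. set (v := G Ci) in *. clearbody u v.
  assert (E : u = ((u - v) + v)%C) by cring. rewrite E, <- HI'. cring.
Qed.

Lemma mobius_comp g h tau : in_SL2Z g -> in_SL2Z h -> 0 < Im tau ->
  zmobius (zmul g h) tau = zmobius g (zmobius h tau).
Proof.
  intros Hg Hh Ht.
  pose proof (jfac_nz h tau Hh Ht) as J1.
  pose proof (jfac_nz g (zmobius h tau) Hg (im_mobius h tau Hh Ht)) as J2.
  destruct g as [[[a b] c] d]. destruct h as [[[a' b'] c'] d'].
  unfold zmobius, zmul, jfac in *. cbn [zmA zmB zmC zmD] in *.
  rewrite !plus_IZR, !mult_IZR, !RtoC_plus, !RtoC_mult.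
  set (A := RtoC (IZR a)) in *. set (B := RtoC (IZR b)) in *.
  set (Cc := RtoC (IZR c)) in *. set (D := RtoC (IZR d)) in *.
  set (A' := RtoC (IZR a')) in *. set (B' := RtoC (IZR b')) in *.
  set (C' := RtoC (IZR c')) in *. set (D' := RtoC (IZR d')) in *.
  clearbody A B Cc D A' B' C' D'.
  assert (J3 : (Cc * (A' * tau + B') + D * (C' * tau + D'))%C <> RtoC 0).
  { intro E. apply J2.
    replace (Cc * ((A' * tau + B') / (C' * tau + D')) + D)%C with
      ((Cc * (A' * tau + B') + D * (C' * tau + D')) / (C' * tau + D'))%C by (field; auto).
    rewrite E. field. auto. }
  field. split; auto.
Qed.

Lemma equiv_shift f g : (forall z, 0 < Im z -> ex_derive f z) -> in_SL2Z g ->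
  (forall tau, 0 < Im tau -> f (zmobius g tau) = ((jfac g tau) ^ 2 * f tau)%C) ->
  forall tau, 0 < Im tau ->
    prim_from_i f (zmobius g tau) = (prim_from_i f tau + prim_from_i f (zmobius g Ci))%C.
Proof.
  intros Hd Hg Hmod.
  set (G := fun z => (prim_from_i f (zmobius g z) - prim_from_i f z)%C).
  assert (GD : forall z, 0 < Im z -> @is_derive C_AbsRing C_NormedModule G z (RtoC 0)).
  { intros z Hz.
    pose proof (is_derive_comp (prim_from_i f) (zmobius g) z _ _
      (prim_derive f Hd (zmobius g z) (im_mobius g z Hg Hz)) (mobius_derive g z Hg Hz)) as H1.
    pose proof (prim_derive f Hd z Hz) as H2.
    pose proof (is_derive_minus _ _ z _ _ H1 H2) as H3.
    pose proof (jfac_nz g z Hg Hz) as Hj.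
    assert (Hv : @minus C_NormedModule (@scal C_AbsRing C_NormedModule (/ (jfac g z * jfac g z))%C
       (f (zmobius g z))) (f z) = RtoC 0).
    { change ((/ (jfac g z * jfac g z)) * f (zmobius g z) - f z = RtoC 0)%C.
      rewrite Hmod by auto. set (u := f z). set (J := jfac g z) in *. clearbody u J.
      field. exact Hj. }
    rewrite Hv in H3. exact H3. }
  intros tau Ht.
  pose proof (const_of_deriv0 G GD tau Ht) as E.
  unfold G in E. rewrite prim_Ci in E.
  set (u := prim_from_i f (zmobius g tau)) in *. set (v := prim_from_i f tau) in *.
  set (w := prim_from_i f (zmobius g Ci)) in *. clearbody u v w.
  assert (E2 : u = ((u - v) + v)%C) by cring. rewrite E2, E. cring.
Qed.


Theorem proposition4p1 (Gam : Zmat -> Prop) (f : C -> C) :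
  is_subgroup_SL2Z Gam -> finite_index_SL2Z Gam ->
  modular_form_wt2 Gam f ->
  exists rho : Zmat -> Cmat,
    is_rep Gam rho /\ is_triangular Gam rho /\
    equivariant Gam rho (prim_from_i f).
Proof.
  intros [HSL [Hid [Hmul Hinv]]] _ [Hd [Hmod _]].
  set (c := fun g => prim_from_i f (zmobius g Ci)).
  assert (Hsh : forall g tau, Gam g -> 0 < Im tau ->
    prim_from_i f (zmobius g tau) = (prim_from_i f tau + c g)%C).
  { intros g tau Hg Ht. apply equiv_shift; auto. }
  exists (fun g => (RtoC 1, c g, RtoC 0, RtoC 1)).
  split; [split|split].
  - intros g _. unfold cdet, cmA, cmB, cmC, cmD.
    replace (RtoC 1 * RtoC 1 - c g * RtoC 0)%C with (RtoC 1) by (set (u := c g); cring).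
    exact C1_nz.
  - intros g h Hg Hh.
    assert (Hc : c (zmul g h) = (c h + c g)%C).
    { unfold c. rewrite mobius_comp by (auto using Ci_H). apply Hsh; auto.
      apply im_mobius; auto using Ci_H. }
    unfold cmul, cmA, cmB, cmC, cmD. rewrite Hc.
    set (u := c g). set (v := c h). clearbody u v.
    replace (RtoC 1 * RtoC 1 + u * RtoC 0)%C with (RtoC 1) by cring.
    replace (RtoC 1 * v + u * RtoC 1)%C with (v + u)%C by cring.
    replace (RtoC 0 * RtoC 1 + RtoC 1 * RtoC 0)%C with (RtoC 0) by cring.
    replace (RtoC 0 * v + RtoC 1 * RtoC 1)%C with (RtoC 1) by cring.
    reflexivity.
  - intros g _. reflexivity.
  - intros g tau Hg Ht. unfold in_H in Ht. rewrite Hsh by auto.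
    unfold cmobius, cmA, cmB, cmC, cmD.
    set (u := c g). set (v := prim_from_i f tau). clearbody u v. cring.
Qed.
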